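(* For every integer $n\geq 2$ there exists a balanced bipartite graph $\mathcal{B}$ on $2n$ vertices with $\delta(\mathcal{B})=\lceil \frac{n}{2}\rceil$ and $f(\mathcal{B})=n+2$.
   Context: All graphs are finite and simple. A balanced bipartite graph on $2n$ vertices is a bipartite graph with a given bipartition $(V_1,V_2)$ where $|V_1|=|V_2|=n$. $\delta(G)$ denotes the minimum degree of $G$. The forest number $f(G)$ is the maximum cardinality of a subset $S\subseteq V(G)$ such that the induced subgraph $G[S]$ is a forest. *)

(* Defs.v *)
From mathcomp Require Import all_boot all_order.
Set Implicit Arguments. Unset Strict Implicit. Unset Printing Implicit Defensive.

Definition simple_graph (T : finType) (e : rel T) : Prop :=
  symmetric e /\ irreflexive e.

(* Balanced bipartite graph on 2n vertices: vertex set 'I_n + 'I_n, with the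
   bipartition V1 = inl-vertices, V2 = inr-vertices; no edge inside a part. *)
Definition bip_vertex (n : nat) : finType := ('I_n + 'I_n)%type.

Definition balanced_bipartite (n : nat) (e : rel (bip_vertex n)) : Prop :=
  simple_graph e /\
  (forall x y : 'I_n, ~~ e (inl x) (inl y)) /\
  (forall x y : 'I_n, ~~ e (inr x) (inr y)).

Definition deg (T : finType) (e : rel T) (v : T) : nat := #|[set u | e v u]|.

Definition min_degree_eq (T : finType) (e : rel T) (d : nat) : Prop :=
  (forall v, d <= deg e v) /\ (exists v, deg e v = d).

Definition has_cycle_in (T : finType) (e : rel T) (S : {set T}) : Prop :=
  exists s : seq T, [/\ uniq s, 3 <= size s, all (fun v => v \in S) s & cycle e s].

Definition induces_forest (T : finType) (e : rel T) (S : {set T}) : Prop :=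
  ~ has_cycle_in e S.

Definition forest_number_eq (T : finType) (e : rel T) (k : nat) : Prop :=
  (exists S : {set T}, induces_forest e S /\ #|S| = k) /\
  (forall S : {set T}, induces_forest e S -> #|S| <= k).

(* Main.v *)
Require Import Defs.
From mathcomp Require Import all_boot all_order.
From mathcomp Require Import zify.
From Stdlib Require Import Classical.

Lemma cyc2 (T : eqType) (e : rel T) : symmetric e ->
  forall s, uniq s -> 3 <= size s -> cycle e s -> forall v, v \in s ->
  exists y z, [/\ y \in s, z \in s, y != z, e v y & e v z].
Proof.
move=> esym s us ss cs v vs.
case: (rot_to vs) => i s' Hr.
have us' : uniq (v :: s') by rewrite -Hr rot_uniq.
have cs' : cycle e (v :: s') by rewrite -Hr rot_cycle.
have ss' : 3 <= size (v :: s') by rewrite -Hr size_rot.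
have mem : forall x, x \in v :: s' -> x \in s by move=> x; rewrite -Hr mem_rot.
case: s' Hr us' cs' ss' mem => [|w t] // _ us' cs' ss' mem.
exists w, (last w t); split.
- by apply: mem; rewrite !inE eqxx orbT.
- apply: mem; rewrite in_cons; apply/orP; right; exact: mem_last.
- case: t us' ss' {cs' mem} => [|u t] //= us' _.
  apply/eqP => Hw; move: us' => /and3P[_ H _].
  by rewrite Hw mem_last in H.
- by move: cs'; rewrite /= => /andP[].
- move: cs'; rewrite /= rcons_path => /andP[_ H].
  by move/andP: H => [_ H]; rewrite esym.
Qed.

Definition cr (h a b : nat) := (h <= a) && (b + h == a) && (a.+1 < h + h).
Definition adj (h a b : nat) := ((a < h) == (b < h)) || cr h a b || cr h b a.
Definition bipe n h : rel (bip_vertex n) := fun u v =>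
  match u, v with
  | inl i, inr j => adj h i j
  | inr j, inl i => adj h i j
  | _, _ => false end.

Lemma adj_sym h a b : adj h a b = adj h b a.
Proof. rewrite /adj eq_sym; by case: (cr h a b); case: (cr h b a); rewrite ?orbT ?orbF. Qed.

Lemma bal n h : balanced_bipartite (bipe n h).
Proof. split; [split|split] => //; [by move=> [i|i] [j|j] | by move=> [i|i]]. Qed.

Lemma upper n h (S : {set bip_vertex n}) (b1 b2 : bool) :
  (forall k : bool, if (if k then b1 else b2)
     then (forall i i' : 'I_n, (i < h) = k -> (i' < h) = k -> inl i \in S -> inl i' \in S -> i = i')
     else (forall i i' : 'I_n, (i < h) = k -> (i' < h) = k -> inr i \in S -> inr i' \in S -> i = i')) ->
  #|S| <= n + 2.
Proof.
move=> H.
pose phi (v : bip_vertex n) : ('I_n + bool)%type :=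
  match v with
  | inl i => if (if i < h then b1 else b2) then inr (i < h) else inl i
  | inr j => if (if j < h then b1 else b2) then inl j else inr (j < h) end.
have inj : {in S &, injective phi}.
  have H1 := H true; have H2 := H false; clear H.
  move=> [i|i] [j|j] Hi Hj; rewrite /phi; clear phi;
  case Ei: (i < h); case Ej: (j < h); case: b1 H1; case: b2 H2 => /= H2 H1;
  move=> // E; try (injection E as E); try subst; try congruence; f_equal;
  first [by apply: H1 | by apply: H2].
rewrite -(card_in_imset inj).
apply: leq_trans (max_card _) _.
by rewrite card_sum card_ord card_bool.
Qed.

Lemma side_small n h (S : {set bip_vertex n}) (k : bool) :
  induces_forest (bipe n h) S ->
  (forall i i' : 'I_n, (i < h) = k -> (i' < h) = k -> inl i \in S -> inl i' \in S -> i = i') \/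
  (forall i i' : 'I_n, (i < h) = k -> (i' < h) = k -> inr i \in S -> inr i' \in S -> i = i').
Proof.
move=> F.
case: (classic (forall i i' : 'I_n, (i < h) = k -> (i' < h) = k -> inl i \in S -> inl i' \in S -> i = i')) => [A|nA]; [by left | right].
move=> j j' Hj Hj' Sj Sj'; apply: NNPP => nej; apply: nA.
move=> i i' Hi Hi' Si Si'; apply: NNPP => nei; apply: F.
exists [:: inl i; inr j; inl i'; inr j']; split => //.
- rewrite /= !inE /= !andbT.
  have -> : (inl i == inl i' :> bip_vertex n) = false by apply/eqP => -[].
  have -> : (inr j == inr j' :> bip_vertex n) = false by apply/eqP => -[].
  by [].
- by rewrite /= Si Sj Si' Sj'.
- by rewrite /= /adj Hi Hj Hi' Hj' eqxx.
Qed.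

Lemma forest_ub n h (S : {set bip_vertex n}) :
  induces_forest (bipe n h) S -> #|S| <= n + 2.
Proof.
move=> F.
case: (@side_small n h S true F) => [A1|B1]; case: (@side_small n h S false F) => [A2|B2].
- by apply: (@upper n h S true true) => -[].
- by apply: (@upper n h S true false) => -[].
- by apply: (@upper n h S false true) => -[].
- by apply: (@upper n h S false false) => -[].
Qed.

Definition nbv (n h : nat) (i k : nat) : nat :=
  if i < h then k else if k < n.+1 - h then k + h else i - h.

Definition nb (n h : nat) (i : 'I_n.+1) (k : 'I_h) : 'I_n.+1 := inord (nbv n h i k).


Lemma nb_val n h (i : 'I_n.+1) (k : 'I_h) : h <= n -> (nb n h i k : nat) = nbv n h i k.
Proof.
move=> hn; rewrite /nb inordK // /nbv.
have := ltn_ord i; have := ltn_ord k.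
case: ifP => _; first lia. case: ifP => ?; lia.
Qed.

Lemma nb_adj n h (i : 'I_n.+1) (k : 'I_h) : h <= n -> n.+1 <= h + h ->
  adj h i (nb n h i k).
Proof.
move=> hn h2; rewrite nb_val // /nbv /adj /cr.
have := ltn_ord i; have := ltn_ord k.
case: ifP => H1; first by rewrite (ltn_ord k) eqxx.
case: ifP => H2 *; first by (have -> : (k + h < h) = false by lia).
apply/orP; left; apply/orP; right; lia.
Qed.

Lemma nb_inj n h (i : 'I_n.+1) : h <= n -> n.+1 <= h + h -> h + h <= n.+2 ->
  injective (nb n h i).
Proof.
move=> hn h2 h3 k k' /(congr1 (@nat_of_ord _)); rewrite !nb_val // /nbv => E; apply: val_inj => /=.
have := ltn_ord k; have := ltn_ord k'; have := ltn_ord i.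
move: E; case: ifP => _; first done.
case: ifP => ?; case: ifP => ?; lia.
Qed.

Lemma deg_lb n h (v : bip_vertex n.+1) : h <= n -> n.+1 <= h + h -> h + h <= n.+2 ->
  h <= deg (bipe n.+1 h) v.
Proof.
move=> hn h2 h3.
case: v => i.
- have inj : injective (fun k => @inr 'I_n.+1 'I_n.+1 (nb n h i k)).
    by move=> k k' [] /nb_inj; apply.
  rewrite /deg -[X in X <= _](card_ord h) -cardsT -(card_imset _ inj).
  apply: subset_leq_card; apply/subsetP => u /imsetP [k _ ->].
  by rewrite inE /= nb_adj.
- have inj : injective (fun k => @inl 'I_n.+1 'I_n.+1 (nb n h i k)).
    by move=> k k' [] /nb_inj; apply.
  rewrite /deg -[X in X <= _](card_ord h) -cardsT -(card_imset _ inj).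
  apply: subset_leq_card; apply/subsetP => u /imsetP [k _ ->].
  by rewrite inE /= adj_sym nb_adj.
Qed.

Lemma adj_a h i : 0 < h -> adj h i (h - 1) = (i < h).
Proof. move=> h0; rewrite /adj /cr; lia. Qed.

Lemma adj_b n h i : h <= n -> i < h -> adj h i n -> i + h = n.
Proof. move=> hn hi; rewrite /adj /cr; lia. Qed.

Lemma deg_exact n h : 0 < h -> h <= n ->
  deg (bipe n.+1 h) (inr (inord (h - 1))) = h.
Proof.
move=> h0 hn.
have hle : h <= n.+1 by lia.
have inj : injective (fun k : 'I_h => @inl 'I_n.+1 'I_n.+1 (widen_ord hle k)).
  by move=> k k' [] E; apply: val_inj.
rewrite /deg.
have -> : [set u | bipe n.+1 h (inr (inord (h - 1))) u] =
          [set (fun k : 'I_h => @inl 'I_n.+1 'I_n.+1 (widen_ord hle k)) x | x in [set: 'I_h]].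
  apply/setP => -[i|i]; rewrite inE /=.
  - rewrite inordK; last lia.
    rewrite adj_a //; apply/idP/imsetP.
    + move=> hi; exists (Ordinal hi); first by rewrite inE.
      by congr inl; apply: val_inj.
    + by move=> [k _ [->]] /=.
  - by apply/esym/negbTE/imsetP => -[k _].
by rewrite card_imset // cardsT card_ord.
Qed.

Definition psi n (a b : 'I_n) (x : ('I_n + bool)%type) : bip_vertex n :=
  match x with inl i => inl i | inr t => inr (if t then a else b) end.

Lemma card_S0 n (a b : 'I_n) : a != b -> #|psi n a b @: [set: ('I_n + bool)%type]| = n + 2.
Proof.
move=> ab.
have inj : injective (psi n a b).
  move=> [i|[]] [j|[]] //= [] E //; try by rewrite E.
  - by move: ab; rewrite E eqxx.
  - by move: ab; rewrite E eqxx.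
by rewrite card_imset // cardsT card_sum card_ord card_bool.
Qed.

Lemma forest_S0 n h : 0 < h -> h <= n ->
  induces_forest (bipe n.+1 h) (psi n.+1 (inord (h - 1)) ord_max @: [set: ('I_n.+1 + bool)%type]).
Proof.
move=> h0 hn [s [us ss alls cs]].
set a : 'I_n.+1 := inord (h - 1).
have va : (a : nat) = h - 1 by rewrite /a inordK //; lia.
have esym : symmetric (bipe n.+1 h) by case: (@bal n.+1 h) => [[]].
have nbr : forall i y, y \in s -> bipe n.+1 h (inl i) y ->
    exists j, y = inr j /\ (j = a \/ j = ord_max).
  move=> i [j|j] ys //= _.
  have := allP alls _ ys => /imsetP [[x|[]] _] //= [->];
  eexists; (split; first reflexivity); first [by left | by right].
have C : forall i, inl i \in s -> i + h = n /\ inr a \in s.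
  move=> i iS.
  have [y [z [yS zS yz ey ez]]] := @cyc2 _ _ esym _ us ss cs _ iS.
  have [j1 [E1 H1]] := nbr _ _ yS ey.
  have [j2 [E2 H2]] := nbr _ _ zS ez.
  subst y z.
  have [A [B Ain]] : adj h i a /\ adj h i (@ord_max n) /\ inr a \in s.
    case: H1 => ?; case: H2 => ?; subst; by [rewrite eqxx in yz | ].
  have ih : i < h by rewrite -adj_a // -va.
  split => //; exact: adj_b hn ih B.
have [i iS] : exists i, inl i \in s.
  clear nbr; case: s us ss cs alls C => [|x0 s'] // us ss cs alls C.
  have x0s : x0 \in x0 :: s' by rewrite inE eqxx.
  case: x0 x0s us ss cs alls C => [i|j] x0s us ss cs alls C; first by exists i.
  have [y [z [yS zS yz ey ez]]] := @cyc2 _ _ esym _ us ss cs _ x0s.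
  by case: y yS ey {ez yz} => [i|j'] // yS _; exists i.
have [_ Ain] := C _ iS.
have [y [z [yS zS yz ey ez]]] := @cyc2 _ _ esym _ us ss cs _ Ain.
case: y yS ey yz => [i1|//] yS _; case: z zS ez => [i2|//] zS _ yz.
have [E1 _] := C _ yS; have [E2 _] := C _ zS.
have E : i1 = i2 by apply: val_inj => /=; lia.
by rewrite E eqxx in yz.
Qed.

Theorem proposition2p2 (n : nat) :
  2 <= n ->
  exists e : rel (bip_vertex n),
    [/\ balanced_bipartite e,
        min_degree_eq e (uphalf n) &
        forest_number_eq e (n + 2)].
Proof.
case: n => [//|n] Hn.
have hu := uphalf_half n.+1.
have hd := odd_double_half n.+1.
set h := uphalf n.+1 in hu *.
have h0 : 0 < h by lia.
have hn : h <= n by lia.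
have h2 : n.+1 <= h + h by lia.
have h3 : h + h <= n.+2 by lia.
exists (bipe n.+1 h); split.
- exact: bal.
- split; first by move=> v; apply: deg_lb.
  by exists (inr (inord (h - 1))); apply: deg_exact.
- split; last by move=> S; apply: forest_ub.
  exists (psi n.+1 (inord (h - 1)) ord_max @: [set: ('I_n.+1 + bool)%type]).
  split; first exact: forest_S0.
  apply: card_S0; apply/eqP => /(congr1 (@nat_of_ord _)) /=.
  rewrite inordK; lia.
Qed.
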